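(* Let $f(w)=\frac1N\sum_{i=1}^N f_i(w)$ be a $\mu$-strongly convex function on $\mathbb{R}^d$ (i.e. $(x-y)^T(\nabla f(x)-\nabla f(y))\ge \mu\|x-y\|^2$ for all $x,y$) whose component gradients $\nabla f_i$ are all $L$-Lipschitz continuous, and let $w^*$ be its global minimizer. Let $(\delta,b)$ be a low-precision representation such that every coordinate of $w^*$ satisfies $-\delta\cdot 2^{b-1}\le (w^* )_j\le \delta\cdot(2^{b-1}-1)$. Then for any $w\in\mathbb{R}^d$, \[ \mathbb{E}\left[\|Q_{(\delta,b)}(w)-w^*\|^2\right]\le \|w-w^*\|^2+\frac{d\delta^2}{4}. \]
   Context: A low-precision representation is a pair $(\delta,b)$ with scale factor $\delta>0$ and number of bits $b\in\mathbb{N}$; the representable numbers are $\mathrm{dom}(\delta,b)=\{-\delta 2^{b-1},\dots,-\delta,0,\delta,\dots,\delta(2^{b-1}-1)\}$. The quantization function $Q_{(\delta,b)}$ acts on vectors componentwise and independently: for a scalar $x$ in the interval $[-\delta 2^{b-1},\delta(2^{b-1}-1)]$, letting $z$ be the largest element of $\mathrm{dom}(\delta,b)$ with $z\le x$, $Q_{(\delta,b)}(x)$ equals $z+\delta$ with probability $(x-z)/\delta$ and $z$ otherwise (so $\mathbb{E}[Q_{(\delta,b)}(x)]=x$); for $x$ outside that interval, $Q_{(\delta,b)}(x)$ is the closest element of $\mathrm{dom}(\delta,b)$ (the largest or smallest representable value). The expectation is over the randomness of the quantization. *)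

(* Defs.v *)
From HB Require Import structures.
From mathcomp Require Import all_boot all_order all_algebra.
From mathcomp Require Import all_classical all_reals all_analysis.
Set Implicit Arguments. Unset Strict Implicit. Unset Printing Implicit Defensive.
Import Order.TTheory GRing.Theory Num.Theory.
Import numFieldNormedType.Exports.
Local Open Scope ring_scope.

Section Defs.
Variable R : realType.

Definition dotv (d : nat) (x y : 'rV[R]_d) : R := \sum_(j < d) x 0 j * y 0 j.
Definition sqnorm (d : nat) (x : 'rV[R]_d) : R := dotv x x.
Definition enorm (d : nat) (x : 'rV[R]_d) : R := Num.sqrt (sqnorm x).

Definition grad (d : nat) (f : 'rV[R]_d -> R) (x : 'rV[R]_d) : 'rV[R]_d :=
  \row_(j < d) ('D_(delta_mx 0 j) f x).

Definition qmin (delta : R) (b : nat) : R := - (delta * 2 ^+ b.-1).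
Definition qmax (delta : R) (b : nat) : R := delta * (2 ^+ b.-1 - 1).

(* largest element z of dom(delta,b) with z <= x (for x in range) *)
Definition qfloor (delta : R) (x : R) : R := delta * (Num.floor (x / delta))%:~R.

Definition inrange (delta : R) (b : nat) (x : R) : bool :=
  (qmin delta b <= x) && (x <= qmax delta b).

(* the two possible outcomes of Q_(delta,b)(x): low (z) and high (z+delta);
   outside the range both are the nearest representable value *)
Definition qlow (delta : R) (b : nat) (x : R) : R :=
  if inrange delta b x then qfloor delta x
  else if x < qmin delta b then qmin delta b else qmax delta b.
Definition qhigh (delta : R) (b : nat) (x : R) : R :=
  if inrange delta b x then qfloor delta x + delta
  else if x < qmin delta b then qmin delta b else qmax delta b.
Definition qprob (delta : R) (b : nat) (x : R) : R :=
  if inrange delta b x then (x - qfloor delta x) / delta else 0.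

Definition qoutcome (delta : R) (b : nat) (d : nat) (w : 'rV[R]_d)
  (c : {ffun 'I_d -> bool}) : 'rV[R]_d :=
  \row_(j < d) (if c j then qhigh delta b (w 0 j) else qlow delta b (w 0 j)).

(* probability of the choices c (coordinates quantized independently) *)
Definition qweight (delta : R) (b : nat) (d : nat) (w : 'rV[R]_d)
  (c : {ffun 'I_d -> bool}) : R :=
  \prod_(j < d) (if c j then qprob delta b (w 0 j) else 1 - qprob delta b (w 0 j)).

Definition qexpect (delta : R) (b : nat) (d : nat) (w : 'rV[R]_d)
  (g : 'rV[R]_d -> R) : R :=
  \sum_(c : {ffun 'I_d -> bool}) qweight delta b w c * g (qoutcome delta b w c).

End Defs.

(* Main.v *)
Require Import Defs.
From HB Require Import structures.
From mathcomp Require Import all_boot all_order all_algebra.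
From mathcomp Require Import all_classical all_reals all_analysis.
From mathcomp Require Import ring lra.
Import Order.TTheory GRing.Theory Num.Theory.
Import numFieldNormedType.Exports.
Local Open Scope ring_scope.

Lemma prod_sum_exp (R : realType) (d : nat) (P F : 'I_d -> bool -> R) :
  (forall j, P j true + P j false = 1) ->
  \sum_(c : {ffun 'I_d -> bool}) (\prod_(j < d) P j (c j)) * (\sum_(j < d) F j (c j))
  = \sum_(j < d) (P j true * F j true + P j false * F j false).
Proof.
move=> HP.
under eq_bigr => c _ do rewrite big_distrr /=.
rewrite exchange_big /=; apply: eq_bigr => j _.
pose Q k v := P k v * (if k == j then F j v else 1).
transitivity (\sum_(c : {ffun 'I_d -> bool}) \prod_(k < d) Q k (c k)).
  apply: eq_bigr => c _; rewrite (bigD1 j) //= [RHS](bigD1 j) //= /Q eqxx.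
  rewrite -!mulrA; congr (_ * _); rewrite mulrC; congr (_ * _).
  by apply: eq_bigr => k /negbTE ->; rewrite mulr1.
rewrite -(bigA_distr_bigA Q) /= (bigD1 j) //= [X in _ * X]big1 ?mulr1.
  by rewrite big_bool /Q eqxx.
by move=> k /negbTE kj; rewrite big_bool /Q kj !mulr1 [LHS]HP.
Qed.

Lemma coord_bound (R : realType) (delta : R) (b : nat) (x a : R) :
  0 < delta -> qmin delta b <= a <= qmax delta b ->
  qprob delta b x * (qhigh delta b x - a) ^+ 2 +
  (1 - qprob delta b x) * (qlow delta b x - a) ^+ 2
  <= (x - a) ^+ 2 + delta ^+ 2 / 4.
Proof.
move=> dp /andP[ha1 ha2]; rewrite /qprob /qhigh /qlow.
case: ifP => Hin.
  set z := qfloor delta x.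
  have [h1 h2] : z <= x /\ x < z + delta.
    rewrite /z /qfloor; have := floor_le (x / delta); have := floorD1_gt (x / delta).
    rewrite intrD /= => H1 H2; split.
      by rewrite -{2}(_ : delta * (x / delta) = x) ?ler_pM2l // mulrC mulfVK // gt_eqF.
    by rewrite -{1}(_ : delta * (x / delta) = x) -1?[X in _ + X]mulr1 -1?mulrDr ?ltr_pM2l // mulrC mulfVK // gt_eqF.
  set t := x - z.
  have ->: x = z + t by rewrite /t addrC subrK.
  have ht : t / delta * delta = t by rewrite mulfVK // gt_eqF.
  set p := t / delta in ht *.
  have ->: p * (z + delta - a) ^+ 2 + (1 - p) * (z - a) ^+ 2 =
    (z - a) ^+ 2 + 2 * (p * delta) * (z - a) + (p * delta) * delta by ring.
  rewrite ht.
  have : 0 <= (delta - 2 * t) ^+ 2 by apply: sqr_ge0.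
  move=> H; rewrite /t in H *; nra.
rewrite mul0r subr0 add0r mul1r.
move: Hin; rewrite /inrange; case: ifP => Hx Hin.
  have : (a - x) ^+ 2 >= (a - qmin delta b) ^+ 2.
    rewrite ler_sqr ?nnegrE; lra.
  rewrite -(sqrrN (qmin _ _ - a)) -(sqrrN (x - a)) !opprB.
  have : 0 <= delta ^+ 2 / 4 by rewrite divr_ge0 // sqr_ge0.
  lra.
have Hx2 : qmax delta b < x.
  rewrite ltNge; apply/negP => H; move: Hin; rewrite H andbT.
  by move/negbT; rewrite -ltNge Hx.
have : (x - a) ^+ 2 >= (qmax delta b - a) ^+ 2.
  rewrite ler_sqr ?nnegrE; lra.
have : 0 <= delta ^+ 2 / 4 by rewrite divr_ge0 // sqr_ge0.
lra.
Qed.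

Theorem lemma1 (R : realType) (d N : nat) (fs : 'I_N -> 'rV[R]_d -> R)
  (mu L delta : R) (b : nat) (wstar : 'rV[R]_d) :
  (0 < N)%N ->
  0 < mu ->
  (forall i x, differentiable (fs i) x) ->
  (forall i x y, enorm (grad (fs i) x - grad (fs i) y) <= L * enorm (x - y)) ->
  let f := fun w : 'rV[R]_d => N%:R^-1 * \sum_(i < N) fs i w in
  (forall x y, dotv (x - y) (grad f x - grad f y) >= mu * sqnorm (x - y)) ->
  (forall w, f wstar <= f w) ->
  0 < delta -> (0 < b)%N ->
  (forall j, qmin delta b <= wstar 0 j <= qmax delta b) ->
  forall w : 'rV[R]_d,
    qexpect delta b w (fun q => sqnorm (q - wstar))
      <= sqnorm (w - wstar) + d%:R * delta ^+ 2 / 4.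
Proof.
move=> _ _ _ _ f _ _ dp _ Hw w.
rewrite /qexpect /qweight.
pose P (j : 'I_d) (v : bool) := if v then qprob delta b (w 0 j) else 1 - qprob delta b (w 0 j).
pose G (j : 'I_d) (v : bool) :=
  ((if v then qhigh delta b (w 0 j) else qlow delta b (w 0 j)) - wstar 0 j) ^+ 2.
rewrite (eq_bigr (fun c : {ffun 'I_d -> bool} => (\prod_(j < d) P j (c j)) * (\sum_(j < d) G j (c j)))); last first.
  move=> c _; congr (_ * _).
  rewrite /sqnorm /dotv; apply: eq_bigr => j _.
  by rewrite /G !mxE expr2; case: (c j).
rewrite prod_sum_exp; last by move=> j; rewrite /P addrC subrK.
have E : d%:R * delta ^+ 2 / 4 = \sum_(j < d) (delta ^+ 2 / 4).
  by rewrite sumr_const card_ord -mulrA mulr_natl.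
rewrite E.
rewrite /sqnorm /dotv.
rewrite -big_split /=; apply: ler_sum => j _.
rewrite /P /G /= !mxE -expr2.
exact: coord_bound.
Qed.
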